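(* Let $G$ and $H$ be upward bipolar plane graphs with the same number $n$ of edges, let $\phi\colon\{1,\dots,n\}\to E(G)$ and $\psi\colon\{1,\dots,n\}\to E(H)$ be bijections, let $\mathbf A=(A;+)$ be an Abelian group and $b\in A$. Let $P=\mathrm{Problem}(G,H,\phi,\psi,\mathbf A,b)$ and let $P^\ast=\mathrm{Problem}(H^\ast,G^\ast,\psi^\ast,\phi^\ast,\mathbf A,b)$ be its dual problem. Then an $n$-tuple $\vec a\in A^n$ is a solution of $P$ if and only if it is a solution of $P^\ast$.
   Context: All graphs are finite directed graphs (parallel edges allowed); each edge $e$ goes from its tail $t(e)$ to its head $h(e)$. A graph is acyclic if it has no directed cycle. A source (sink) is a vertex with no incoming (outgoing) edges. A bipolar graph is an acyclic digraph with at least two vertices, exactly one source $s_G$ and exactly one sink $t_G$; every maximal directed path in it goes from $s_G$ to $t_G$. Paired-bipolar-graphs problem: $G,H$ bipolar graphs with $n$ edges each, bijections $\phi\colon\{1,\dots,n\}\to E(G)$, $\psi\colon\{1,\dots,n\}\to E(H)$; write $e_i=\phi(i)$, $e'_i=\psi(i)$; $\mathbf A=(A;+)$ an Abelian group, $b\in A$. This data is denoted $\mathrm{Problem}(G,H,\phi,\psi,\mathbf A,b)$. For $\vec a=(a_1,\dots,a_n)\in A^n$ and $X\subseteq\{1,\dots,n\}$ define $\mathrm{Eff}_{\vec a}(X)\colon V(G)\to A$ by $\mathrm{Eff}_{\vec a}(X)(v)=\sum_{i\in X,\,h(e_i)=v}a_i-\sum_{i\in X,\,t(e_i)=v}a_i$.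 Define $\mathrm{Tr}_b\colon V(G)\to A$ by $\mathrm{Tr}_b(s_G)=-b$, $\mathrm{Tr}_b(t_G)=b$, and $\mathrm{Tr}_b(v)=0$ otherwise. The tuple $\vec a$ is a solution of the problem if for every maximal directed path of $H$, with edge set $\{e'_j:j\in X\}$, we have $\mathrm{Eff}_{\vec a}(X)=\mathrm{Tr}_b$. A plane graph has vertices that are points of $\mathbb R^2$ and edges that are oriented Jordan arcs between their endpoints, with arcs meeting only at common endpoints. An upward bipolar plane graph is a bipolar plane graph $G$ such that $s_G$ and $t_G$ both lie on the boundary of the unbounded region (the outer face). Facets of such $G$: the bounded regions (inner facets) together with the two parts into which the unbounded region is cut by a curve inside it joining $s_G$ to $t_G$ through the point at infinity (the two outer facets). The dual $G^\ast$ has the facets of $G$ as vertices and, for each edge $e\in E(G)$, a dual edge $e^\ast$ going from the facet lying to the left of $e$ (when walking along $e$ from $t(e)$ to $h(e)$) to the facet lying to its right; $G^\ast$ is a bipolar graph whose source and sink are the two outer facets. The dual problem of $P=\mathrm{Problem}(G,H,\phi,\psi,\mathbf A,b)$ is $P^\ast=\mathrm{Problem}(H^\ast,G^\ast,\psi^\ast,\phi^\ast,\mathbf A,b)$, where $\psi^\ast(i)=(e'_i)^\ast$ and $\phi^\ast(i)=(e_i)^\ast$ (so the roles of the two graphs are interchanged and both are dualized). *)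

(* Defs.v *)
(* Combinatorial model of upward bipolar plane graphs
   (rotation systems of genus 0 with a designated outer face). *)
From mathcomp Require Import all_boot all_algebra perm.
Set Implicit Arguments. Unset Strict Implicit. Unset Printing Implicit Defensive.
Import GRing.Theory.
Local Open Scope ring_scope.

Record digraph := DiGraph {
  gV : finType; gE : finType; gtl : gE -> gV; ghd : gE -> gV }.

Section Paths.
Variable G : digraph.

Fixpoint walk_from (v : gV G) (p : seq (gE G)) : bool :=
  if p is e :: p' then (gtl e == v) && walk_from (ghd e) p' else true.

Definition walk_verts (v : gV G) (p : seq (gE G)) := v :: map (@ghd G) p.
Definition walk_end (v : gV G) (p : seq (gE G)) := last v (map (@ghd G) p).

Definition dpath (v : gV G) (p : seq (gE G)) :=
  walk_from v p && uniq (walk_verts v p).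

Definition maxpath (v : gV G) (p : seq (gE G)) :=
  [&& dpath v p,
      ~~ [exists e, (ghd e == v) && (gtl e \notin walk_verts v p)] &
      ~~ [exists e, (gtl e == walk_end v p) && (ghd e \notin walk_verts v p)]].

Definition acyclic := forall v p, walk_from v p -> walk_end v p = v -> p = [::].

Definition bipolar (s t : gV G) :=
  [/\ acyclic, (2 <= #|gV G|)%N,
      (forall v, (~~ [exists e, ghd e == v]) = (v == s)) &
      (forall v, (~~ [exists e, gtl e == v]) = (v == t))].
End Paths.

Section Problem.
Variables (A : zmodType) (G H : digraph) (sG tG : gV G) (n : nat).
Variables (phi : 'I_n -> gE G) (psi : 'I_n -> gE H) (b : A).

Definition Eff (a : 'I_n -> A) (X : pred 'I_n) (v : gV G) : A :=
  \sum_(i < n | X i && (ghd (phi i) == v)) a i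
  - \sum_(i < n | X i && (gtl (phi i) == v)) a i.

Definition Tr (v : gV G) : A := if v == sG then - b else if v == tG then b else 0.

Definition solution (a : 'I_n -> A) :=
  forall v p, maxpath v p -> forall w, Eff a (fun i => psi i \in p) w = Tr w.
End Problem.

Section Plane.
Variables (G : digraph) (sigma : {perm (gE G * bool)}) (dout : gE G * bool).
Variables (s t : gV G).

(* darts: (e,true) is the half-edge of e at its tail, (e,false) at its head *)
Definition dvert (d : gE G * bool) : gV G := if d.2 then gtl d.1 else ghd d.1.

(* face permutation: traverse the dart, then rotate (counterclockwise) at the
   reached vertex; the orbit of (e,true) is the face to the right of e,
   the orbit of (e,false) the face to the left of e *)
Definition fphi (d : gE G * bool) : gE G * bool := sigma (d.1, ~~ d.2).

Definition rotation_system :=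
  (forall d, dvert (sigma d) = dvert d) /\
  (forall d d', dvert d = dvert d' -> fconnect sigma d d').

(* genus 0 (the graph is connected, being bipolar): V - E + F = 2 *)
Definition genus0 := (#|gV G| + #|froots fphi| = #|gE G| + 2)%N.

Definition outer (d : gE G * bool) := fconnect fphi dout d.

Definition upward_plane :=
  [/\ rotation_system, genus0,
      (exists d, outer d /\ dvert d = s) & (exists d, outer d /\ dvert d = t)].

Definition dart_s := odflt dout [pick d | outer d && (dvert d == s)].
Definition dart_t := odflt dout [pick d | outer d && (dvert d == t)].

(* facet containing a dart: inner faces are named by their root dart; the
   outer face is cut (by the curve through infinity from s to t) into the part
   along the boundary walk from s to t (inr true, right outer facet) and the
   part from t back to s (inr false, left outer facet). *)
Definition raw_facet (d : gE G * bool) : (gE G * bool) + bool :=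
  if outer d then inr (findex fphi dart_s d < findex fphi dart_s dart_t)%N
  else inl (froot fphi d).

Definition is_facet : pred ((gE G * bool) + bool) :=
  fun f => [exists d, raw_facet d == f].

Definition facet := {f : (gE G * bool) + bool | is_facet f}.

Definition facet_of (d : gE G * bool) : facet :=
  exist _ (raw_facet d) (introT (@existsP _ (fun d' => raw_facet d' == raw_facet d))
                           (ex_intro _ d (eqxx _))).

Definition dual : digraph :=
  @DiGraph facet (gE G) (fun e => facet_of (e, false)) (fun e => facet_of (e, true)).

Definition dual_source : gV dual := facet_of dart_t.
Definition dual_sink : gV dual := facet_of dart_s.
End Plane.

(* Main.v *)
Require Import Defs.
From mathcomp Require Import all_boot all_algebra perm.
From mathcomp Require Import zify.
Set Implicit Arguments. Unset Strict Implicit. Unset Printing Implicit Defensive.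
Import GRing.Theory.

Section Digraph.
Variable D : digraph.
Implicit Types (v w : gV D) (p q : seq (gE D)).

Lemma walk_from_cat v p q :
  walk_from v (p ++ q) = walk_from v p && walk_from (walk_end v p) q.
Proof. by elim: p v => [|e p IH] v //=; rewrite IH andbA. Qed.

Lemma walk_end_cat v p q : walk_end v (p ++ q) = walk_end (walk_end v p) q.
Proof. by rewrite /walk_end map_cat last_cat. Qed.

Lemma walk_end_cons v e p : walk_end v (e :: p) = walk_end (ghd e) p.
Proof. by []. Qed.

Definition adj : rel (gV D) := fun x y => [exists e, (gtl e == x) && (ghd e == y)].

Lemma connect_walk  x y : connect adj x y -> exists p, walk_from x p && (walk_end x p == y).
Proof.
case/connectP=> q; elim: q x => [|z q IH] x /=; first by move=> _ ->; exists [::]; rewrite /= /walk_end /= eqxx.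
rewrite /adj; case/andP=> /existsP[e /andP[/eqP tx /eqP hz]] pq yl.
have [p /andP[wp ep]] := IH _ pq yl.
by exists (e :: p); rewrite /= tx eqxx /= walk_end_cons hz wp.
Qed.

Lemma walk_connect x p : walk_from x p -> connect adj x (walk_end x p).
Proof.
elim: p x => [|e p IH] x /=; first by rewrite connect0.
case/andP=> /eqP tx wp; apply: connect_trans (IH _ wp).
by apply: connect1; apply/existsP; exists e; rewrite tx !eqxx.
Qed.

Section Acyclic.
Hypothesis Hac : acyclic D.

Definition rk v := #|[set u | connect adj u v]|.

Lemma rk_lt e : rk (gtl e) < rk (ghd e).
Proof.
apply: proper_card; apply/properP; split.
  apply/subsetP=> u; rewrite !inE => cu; apply: connect_trans cu _.
  by apply: connect1; apply/existsP; exists e; rewrite !eqxx.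
exists (ghd e); first by rewrite inE connect0.
rewrite inE; apply/negP=> /connect_walk[p /andP[wp /eqP ep]].
have := Hac (v := gtl e) (p := e :: p); rewrite /= eqxx wp => /(_ isT).
by rewrite walk_end_cons ep => /(_ erefl).
Qed.

Lemma walk_rk v p u : walk_from v p -> u \in walk_verts v p ->
  rk v <= rk u <= rk (walk_end v p).
Proof.
elim: p v u => [|e p IH] v u /=; first by rewrite /walk_verts inE => _ /eqP ->; rewrite leqnn.
case/andP=> /eqP tv wp; rewrite /walk_verts /= inE => /orP[/eqP ->|uin].
  rewrite leqnn /=; have := IH _ (ghd e) wp; rewrite /walk_verts inE eqxx /= => /(_ isT).
  by case/andP=> _; apply: leq_trans; rewrite -tv ltnW ?rk_lt.
have /andP[h1 h2] := IH _ u wp uin; rewrite h2 andbT.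
by apply: leq_trans h1; rewrite -tv ltnW ?rk_lt.
Qed.

Lemma walk_sorted v p : walk_from v p -> path (fun x y => rk x < rk y) v (map (@ghd D) p).
Proof.
elim: p v => [|e p IH] v //= /andP[/eqP tv wp].
by rewrite IH // andbT -tv rk_lt.
Qed.

Lemma walk_uniq v p : walk_from v p -> uniq (walk_verts v p).
Proof.
move=> wp; apply: (sorted_uniq (leT := fun x y => rk x < rk y)).
- by move=> x y z; apply: ltn_trans.
- by move=> x; rewrite /= ltnn.
exact: walk_sorted.
Qed.

Lemma walk_uniq_edges v p : walk_from v p -> uniq p.
Proof. by move/walk_uniq; rewrite /walk_verts /= => /andP[_ /map_uniq]. Qed.

Lemma exists_source (v0 : gV D) : exists v, ~~ [exists e, ghd e == v].
Proof.
have [v _ vmin] := arg_minnP rk (isT : predT v0).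
exists v; apply/existsP=> -[e /eqP he].
by have := vmin (gtl e) isT; rewrite -he leqNgt rk_lt.
Qed.

Lemma exists_sink (v0 : gV D) : exists v, ~~ [exists e, gtl e == v].
Proof.
have [v _ vmax] := arg_maxnP rk (isT : predT v0).
exists v; apply/existsP=> -[e /eqP he].
by have := vmax (ghd e) isT; rewrite -he => /(leq_trans (rk_lt e)); rewrite ltnn.
Qed.
End Acyclic.
End Digraph.

Section Bipolar.
Variables (D : digraph) (s t : gV D).
Hypothesis Hb : bipolar s t.
Implicit Types (v w : gV D) (p q : seq (gE D)).

Lemma bp_acyclic : acyclic D. Proof. by case: Hb. Qed.
Lemma bp_card : (2 <= #|gV D|)%N. Proof. by case: Hb. Qed.
Lemma bp_src v : (~~ [exists e, ghd e == v]) = (v == s). Proof. by case: Hb. Qed.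
Lemma bp_snk v : (~~ [exists e, gtl e == v]) = (v == t). Proof. by case: Hb. Qed.

Lemma bp_in v : v != s -> exists e, ghd e = v.
Proof. by rewrite -bp_src negbK => /existsP[e /eqP]; exists e. Qed.
Lemma bp_out v : v != t -> exists e, gtl e = v.
Proof. by rewrite -bp_snk negbK => /existsP[e /eqP]; exists e. Qed.
Lemma bp_noin e : ghd e != s.
Proof. by apply/negP=> /eqP h; move: (bp_src s); rewrite eqxx => /existsP; apply; exists e; rewrite h. Qed.
Lemma bp_noout e : gtl e != t.
Proof. by apply/negP=> /eqP h; move: (bp_snk t); rewrite eqxx => /existsP; apply; exists e; rewrite h. Qed.

Lemma walk_to v : exists p, walk_from s p && (walk_end s p == v).
Proof.
have Hac := bp_acyclic.
suff: forall n v, (rk v < n)%N -> exists p, walk_from s p && (walk_end s p == v) by apply; apply: ltnSn.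
elim=> [|n IH] {}v //; rewrite ltnS => Hv.
have [->|nvs] := eqVneq v s; first by exists [::]; rewrite /= /walk_end /= eqxx.
have [e he] := bp_in nvs.
have lt := rk_lt Hac e; rewrite he in lt.
have [p /andP[wp /eqP ep]] := IH (gtl e) (leq_trans lt Hv).
exists (rcons p e); rewrite -cats1 walk_from_cat walk_end_cat wp ep /=.
by rewrite eqxx walk_end_cons /walk_end /= he eqxx.
Qed.

Lemma walk_from_to v : exists p, walk_from v p && (walk_end v p == t).
Proof.
have Hac := bp_acyclic.
suff: forall n v, (#|gV D| - rk v < n)%N -> exists p, walk_from v p && (walk_end v p == t).
  by apply; apply: ltnSn.
elim=> [|n IH] {}v //; rewrite ltnS => Hv.
have [->|nvt] := eqVneq v t; first by exists [::]; rewrite /= /walk_end /= eqxx.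
have [e he] := bp_out nvt.
have lt := rk_lt Hac e; rewrite he in lt.
have hle : (rk (ghd e) <= #|gV D|)%N by apply: max_card.
have [p /andP[wp ep]] := IH (ghd e) (leq_trans (ltn_sub2l (leq_trans lt hle) lt) Hv).
by exists (e :: p); rewrite /= he eqxx wp walk_end_cons.
Qed.

Lemma bp_neq : s != t.
Proof.
apply/negP=> /eqP est.
case: (pickP (fun v => v != s)) => [v nvs|H]; last first.
  have : (#|gV D| <= 1)%N.
    rewrite -(card1 s); apply: eq_leq; apply: eq_card => y; rewrite !inE.
    by move: (H y) => /negbFE ->.
  by rewrite leqNgt bp_card.
have [[|e p] /andP[wp /eqP ep]] := walk_to v.
  by move: nvs; rewrite -ep /walk_end /= eqxx.
by move: wp => /= /andP[/eqP te _]; move: (bp_noout e); rewrite te est eqxx.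
Qed.

Lemma maxpathP v p : maxpath v p = [&& v == s, walk_from v p & walk_end v p == t].
Proof.
have Hac := bp_acyclic.
apply/idP/idP.
  case/and3P=> /andP[wp up] nin nout; rewrite wp /=; apply/andP; split.
    apply/negPn/negP=> nvs; have [e he] := bp_in nvs.
    move/existsP: nin; apply; exists e; rewrite he eqxx /=.
    apply/negP=> /(walk_rk Hac wp) /andP[h _]; have := rk_lt Hac e; rewrite he.
    by move=> /leq_trans /(_ h); rewrite ltnn.
  apply/negPn/negP=> nvt; have [e he] := bp_out nvt.
  move/existsP: nout; apply; exists e; rewrite he eqxx /=.
  apply/negP=> /(walk_rk Hac wp) /andP[_ h]; have := rk_lt Hac e; rewrite he.
  by move=> /leq_trans /(_ h); rewrite ltnn.
case/and3P=> /eqP -> wp /eqP ep; rewrite /maxpath /dpath wp (walk_uniq Hac wp) /=.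
apply/andP; split; apply/existsP=> -[e /andP[/eqP h _]].
  by move: (bp_noin e); rewrite h eqxx.
by move: (bp_noout e); rewrite h ep eqxx.
Qed.

Lemma maxpath_s v p : maxpath v p -> v = s.
Proof. by rewrite maxpathP => /and3P[/eqP]. Qed.

Lemma edge_on_maxpath e : exists p, maxpath s p && (e \in p).
Proof.
have [p1 /andP[w1 /eqP e1]] := walk_to (gtl e).
have [p2 /andP[w2 /eqP e2]] := walk_from_to (ghd e).
exists (p1 ++ e :: p2); rewrite maxpathP eqxx walk_from_cat w1 e1 /= eqxx w2.
by rewrite walk_end_cat e1 walk_end_cons e2 eqxx mem_cat mem_head orbT.
Qed.
End Bipolar.

Local Open Scope ring_scope.

Section Sums.
Variables (D : digraph).
Implicit Types (v w : gV D) (p q : seq (gE D)).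

Definition div (A : zmodType) (x : gE D -> A) (v : gV D) : A :=
  \sum_(e | ghd e == v) x e - \sum_(e | gtl e == v) x e.

Lemma walk_telescope (A : zmodType) (f : gV D -> A) v p : walk_from v p ->
  \sum_(e <- p) (f (ghd e) - f (gtl e)) = f (walk_end v p) - f v.
Proof.
elim: p v => [|e p IH] v /=; first by rewrite big_nil /walk_end /= subrr.
case/andP=> /eqP tv wp; rewrite big_cons (IH _ wp) walk_end_cons tv.
by rewrite addrC addrA subrK.
Qed.

Lemma walk_div (R : ringType) v p w : walk_from v p ->
  \sum_(e <- p) ((ghd e == w)%:R - (gtl e == w)%:R : R) =
  (walk_end v p == w)%:R - (v == w)%:R.
Proof. exact: (walk_telescope (fun u => (u == w)%:R)). Qed.

Lemma div_uniq (R : ringType) p w : uniq p ->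
  div (fun e => (e \in p)%:R : R) w =
  \sum_(e <- p) ((ghd e == w)%:R - (gtl e == w)%:R).
Proof.
move=> up; rewrite big_uniq // /div sumrB; congr (_ - _).
  rewrite big_mkcond [RHS]big_mkcond; apply: eq_bigr => e _.
  by case: (e \in p); case: (ghd e == w).
rewrite big_mkcond [RHS]big_mkcond; apply: eq_bigr => e _.
by case: (e \in p); case: (gtl e == w).
Qed.

Lemma div_exchange (A : zmodType) (c : gV D -> int) (x : gE D -> A) :
  \sum_e x e *~ (c (ghd e) - c (gtl e)) = \sum_v div x v *~ c v.
Proof.
rewrite /div; under [RHS]eq_bigr do rewrite mulrzBl !mulrz_suml.
rewrite sumrB; under eq_bigr do rewrite mulrzBr.
rewrite sumrB; congr (_ - _).
  rewrite (exchange_big_dep xpredT) //=; apply: eq_bigr => e _.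
  by rewrite (big_pred1 (ghd e)) // => v; rewrite eq_sym.
rewrite (exchange_big_dep xpredT) //=; apply: eq_bigr => e _.
by rewrite (big_pred1 (gtl e)) // => v; rewrite eq_sym.
Qed.

Lemma div_sum (R : ringType) (x : gE D -> R) v :
  div x v = \sum_e x e * ((ghd e == v)%:R - (gtl e == v)%:R).
Proof.
under eq_bigr do rewrite mulrBr.
rewrite sumrB /div; congr (_ - _); rewrite big_mkcond; apply: eq_bigr => e _;
  by case: eqP; rewrite ?mulr1 ?mulr0.
Qed.

Lemma sum_delta (T : finType) (R : ringType) (g : T -> R) a :
  \sum_x g x * (a == x)%:R = g a.
Proof.
rewrite (bigD1 a) //= eqxx mulr1 big1 ?addr0 // => x nx.
by rewrite eq_sym (negbTE nx) mulr0.
Qed.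

Variables (s t : gV D).
Hypothesis Hb : bipolar s t.

Lemma Tr_exchange (A : zmodType) (c : gV D -> int) (b : A) :
  \sum_v Tr s t b v *~ c v = b *~ (c t - c s).
Proof.
have nst := bp_neq Hb.
rewrite (bigD1 s) // (bigD1 t) 1?eq_sym //= big1 => [|v /andP[nvs nvt]].
  by rewrite /Tr eqxx eq_sym (negbTE nst) eqxx addr0 mulrzBr mulNrz addrC.
by rewrite /Tr (negbTE nvs) (negbTE nvt) mul0rz.
Qed.

Lemma potential (A : zmodType) (z : gE D -> A) (b : A) :
  (forall v p, maxpath v p -> \sum_(e | e \in p) z e = b) ->
  exists pi : gV D -> A, (forall e, z e = pi (ghd e) - pi (gtl e)) /\ pi t - pi s = b.
Proof.
move=> Hz.
have Hac := bp_acyclic Hb.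
have Hw : forall p, walk_from s p -> walk_end s p = t -> \sum_(e <- p) z e = b.
  move=> p wp ep; rewrite big_uniq ?(walk_uniq_edges Hac wp) //.
  by apply: (Hz s); rewrite (maxpathP Hb) eqxx wp ep eqxx.
have Heq : forall p q, walk_from s p -> walk_from s q -> walk_end s p = walk_end s q ->
    \sum_(e <- p) z e = \sum_(e <- q) z e.
  move=> p q wp wq epq.
  have [r /andP[wr /eqP er]] := walk_from_to Hb (walk_end s p).
  have h1 := Hw (p ++ r); have h2 := Hw (q ++ r).
  rewrite !walk_from_cat !walk_end_cat wp wq -epq wr er big_cat in h1 h2.
  have := h1 isT erefl; rewrite -(h2 isT erefl) big_cat /=.
  by move/addIr.
pose pth v := xchoose (walk_to Hb v).
have Pp v : walk_from s (pth v) && (walk_end s (pth v) == v) := xchooseP (walk_to Hb v).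
exists (fun v => \sum_(e <- pth v) z e); split.
  move=> e; have /andP[w1 /eqP e1] := Pp (gtl e); have /andP[w2 /eqP e2] := Pp (ghd e).
  rewrite (Heq (pth (ghd e)) (rcons (pth (gtl e)) e) w2).
  - by rewrite -cats1 big_cat big_seq1 /= addrAC subrr add0r.
  - by rewrite -cats1 walk_from_cat w1 e1 /= eqxx.
  by rewrite e2 -cats1 walk_end_cat e1 walk_end_cons /walk_end.
have /andP[w1 /eqP e1] := Pp t; have /andP[w2 /eqP e2] := Pp s.
rewrite (Hw _ w1 e1) (Heq _ [::] w2) // ?big_nil ?subr0 //.
Qed.
End Sums.

Local Close Scope ring_scope.

Local Open Scope ring_scope.

Section Plane.
Variables (K : digraph) (sg : {perm (gE K * bool)}) (dout : gE K * bool) (s t : gV K).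
Hypothesis Hb : bipolar s t.
Hypothesis Hp : upward_plane sg dout s t.

Local Notation fp := (fphi sg).
Local Notation ds := (dart_s sg dout s).
Local Notation dt := (dart_t sg dout t).
Local Notation out := (outer sg dout).
Local Notation rf := (raw_facet sg dout s t).
Local Notation fo := (facet_of sg dout s t).

Definition flip (d : gE K * bool) := (d.1, ~~ d.2).
Lemma flipK : involutive flip. Proof. by case=> e b; rewrite /flip /= negbK. Qed.
Lemma fpE d : fp d = sg (flip d). Proof. by []. Qed.
Lemma fp_inj : injective fp.
Proof. by move=> x y; rewrite !fpE => /perm_inj /(can_inj flipK). Qed.

Lemma rot_sys : rotation_system sg. Proof. by case: Hp. Qed.
Lemma dvert_sg d : dvert (sg d) = dvert d. Proof. by case: rot_sys. Qed.
Lemma dvert_fp d : dvert (fp d) = dvert (flip d). Proof. by rewrite fpE dvert_sg. Qed.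
Lemma sg_conn d d' : dvert d = dvert d' -> fconnect sg d d'. Proof. by case: rot_sys => _; apply. Qed.

Lemma fconn_sym x y : fconnect fp x y = fconnect fp y x.
Proof. exact: fconnect_sym fp_inj x y. Qed.

Lemma ds_spec : out ds /\ dvert ds = s.
Proof.
rewrite /dart_s; case: pickP => [d /andP[od /eqP vd]|H] //=.
by case: Hp => _ _ [d [od vd]] _; move: (H d); rewrite od vd eqxx.
Qed.
Lemma dt_spec : out dt /\ dvert dt = t.
Proof.
rewrite /dart_t; case: pickP => [d /andP[od /eqP vd]|H] //=.
by case: Hp => _ _ _ [d [od vd]]; move: (H d); rewrite od vd eqxx.
Qed.

Lemma outerE d : out d = fconnect fp ds d.
Proof.
have [o _] := ds_spec; rewrite /outer in o *.
apply/idP/idP => h; last exact: connect_trans o h.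
by apply: connect_trans h; rewrite fconn_sym.
Qed.

Lemma ds_neq_dt : ds != dt.
Proof.
apply/negP=> /eqP e; have [_ vs] := ds_spec; have [_ vt] := dt_spec.
by move: (bp_neq Hb); rewrite -vs -vt e eqxx.
Qed.

Definition idx d := findex fp ds d.
Definition ord := order fp ds.
Definition kk := idx dt.

Lemma idx_lt d : out d -> (idx d < ord)%N.
Proof. by rewrite outerE; apply: findex_max. Qed.
Lemma iter_idx d : out d -> iter (idx d) fp ds = d.
Proof. by rewrite outerE; apply: iter_findex. Qed.
Lemma idx_iter i : (i < ord)%N -> idx (iter i fp ds) = i.
Proof. exact: findex_iter. Qed.
Lemma out_iter i : out (iter i fp ds).
Proof. by rewrite outerE fconnect_iter. Qed.
Lemma idx_ds : idx ds = 0%N. Proof. exact: findex0. Qed.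
Lemma idx_inj d d' : out d -> out d' -> idx d = idx d' -> d = d'.
Proof. by move=> od od' e; rewrite -(iter_idx od) -(iter_idx od') e. Qed.

Lemma kk_pos : (0 < kk)%N.
Proof.
rewrite /kk lt0n; apply/negP=> /eqP k0; have [o _] := dt_spec.
by move: ds_neq_dt; rewrite -(iter_idx o) k0 eqxx.
Qed.
Lemma kk_lt : (kk < ord)%N. Proof. by apply: idx_lt; case: dt_spec. Qed.

Lemma out_fp d : out (fp d) = out d.
Proof. by rewrite !outerE -(same_fconnect1_r fp_inj). Qed.

Lemma idx_next d : out d -> fp d != ds -> idx (fp d) = (idx d).+1.
Proof.
move=> od nds; have lt := idx_lt od.
have fe : fp d = iter (idx d).+1 fp ds by rewrite iterS iter_idx.
rewrite fe; apply: idx_iter; rewrite ltn_neqAle lt andbT.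
apply/negP=> /eqP e; move: nds; rewrite fe e iter_order ?eqxx //; exact: fp_inj.
Qed.

Lemma idx_prev_ds d : fp d = ds -> out d /\ idx d = ord.-1.
Proof.
move=> e; have od : out d by rewrite -out_fp e; case: ds_spec.
split=> //; have lt := idx_lt od.
have : iter (idx d).+1 fp ds = ds by rewrite iterS iter_idx.
case: (ltnP (idx d).+1 ord) => [lt2|ge].
  by move=> h; have := idx_iter lt2; rewrite h idx_ds.
by move=> _; apply/eqP; rewrite -(eqn_add2r 1) !addn1 (ltn_predK lt) eqn_leq ge lt.
Qed.

Lemma rfE d : rf d = if out d then inr (idx d < kk)%N else inl (froot fp d).
Proof. by []. Qed.

Lemma rf_next d : fp d != ds -> fp d != dt -> rf (fp d) = rf d.
Proof.
move=> n1 n2; rewrite !rfE out_fp; case: ifP => od.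
  rewrite idx_next //; congr inr; rewrite [RHS]leq_eqVlt.
  case: eqVneq => //= e; case/negP: n2; apply/eqP.
  apply: idx_inj; [by rewrite out_fp | by case: dt_spec | by rewrite idx_next].
congr inl; symmetry; apply/(fingraph.rootP fconn_sym); exact: fconnect1.
Qed.

Lemma rf_ds : rf ds = inr true.
Proof. by rewrite rfE; case: ds_spec => -> _; rewrite idx_ds kk_pos. Qed.
Lemma rf_dt : rf dt = inr false.
Proof. by rewrite rfE; case: dt_spec => -> _; rewrite ltnn. Qed.

Lemma rf_prev_ds d : fp d = ds -> rf d = inr false.
Proof.
move=> e; have [od id] := idx_prev_ds e; rewrite rfE od id; congr inr.
by apply/negbTE; rewrite -leqNgt -ltnS (ltn_predK kk_lt) kk_lt.
Qed.

Lemma rf_prev_dt d : fp d = dt -> rf d = inr true.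
Proof.
move=> e; have od : out d by rewrite -out_fp e; case: dt_spec.
by rewrite rfE od; congr inr; rewrite /kk -e idx_next ?ltnSn // e eq_sym ds_neq_dt.
Qed.

Lemma fo_eq d d' : rf d = rf d' -> fo d = fo d'.
Proof. by move=> e; apply: val_inj. Qed.

Lemma rf_inrP d b : (rf d == inr b) = out d && ((idx d < kk)%N == b).
Proof. by rewrite rfE; case: (out d). Qed.

Lemma sum_darts (A : zmodType) (P : pred (gE K * bool)) (F : gE K * bool -> A) :
  \sum_(d | P d) F d = \sum_(e | P (e, true)) F (e, true) + \sum_(e | P (e, false)) F (e, false).
Proof.
rewrite big_mkcond (eq_bigr (fun p => (fun e b => if P (e, b) then F (e, b) else 0) p.1 p.2)); last by case.
rewrite -(pair_bigA _ (fun e b => if P (e, b) then F (e, b) else 0)) /=.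
rewrite !(big_mkcond (fun e => P (e, _))) -big_split /=.
apply: eq_bigr => e _; exact: big_bool.
Qed.

Lemma fo_eqE d d' : (fo d == fo d') = (rf d == rf d').
Proof. by []. Qed.

Lemma L1 (A : zmodType) (phi : facet sg dout s t -> A) v :
  div (fun e => phi (fo (e, true)) - phi (fo (e, false))) v =
  Tr s t (phi (fo ds) - phi (fo dt)) v.
Proof.
pose h d := phi (fo d).
have E1 : div (fun e => phi (fo (e, true)) - phi (fo (e, false))) v =
          \sum_(d | dvert d == v) (h (flip d) - h d).
  rewrite sum_darts /= /div addrC; congr (_ + _).
  by rewrite -sumrN; apply: eq_bigr => e _; rewrite opprB.
have E2 : \sum_(d | dvert d == v) h d = \sum_(d | dvert d == v) h (sg d).
  rewrite (reindex_inj (@perm_inj _ sg)) /=.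
  by apply: eq_bigl => d; rewrite dvert_sg.
rewrite E1 sumrB E2 -sumrB.
have T0 d : sg d != ds -> sg d != dt -> h (flip d) - h (sg d) = 0.
  move=> n1 n2; rewrite /h (@fo_eq (sg d) (flip d)) ?subrr //.
  have e : fp (flip d) = sg d by rewrite fpE flipK.
  by rewrite -e; apply: rf_next; rewrite ?e.
have nst := bp_neq Hb.
have [_ vs] := ds_spec; have [_ vt] := dt_spec.
have nX d X : dvert d != dvert X -> sg d != X.
  by move=> h1; apply: contra h1 => /eqP <-; rewrite dvert_sg.
rewrite /Tr; case: eqVneq => [->|nvs].
  pose d0 := (sg^-1)%g ds.
  have sd0 : sg d0 = ds by rewrite permKV.
  have vd0 : dvert d0 == s by rewrite -dvert_sg sd0 vs.
  rewrite (bigD1 d0) //= big1 ?addr0 => [|d /andP[/eqP vd nd]].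
    rewrite sd0 /h (@fo_eq (flip d0) dt); first by rewrite opprB.
    by rewrite rf_dt rf_prev_ds // fpE flipK.
  apply: T0; first by apply/negP => /eqP e; move/negP: nd; apply; apply/eqP; apply: (@perm_inj _ sg); rewrite e sd0.
  by apply: nX; rewrite vd vt.
case: eqVneq => [->|nvt].
  pose d0 := (sg^-1)%g dt.
  have sd0 : sg d0 = dt by rewrite permKV.
  have vd0 : dvert d0 == t by rewrite -dvert_sg sd0 vt.
  rewrite (bigD1 d0) //= big1 ?addr0 => [|d /andP[/eqP vd nd]].
    rewrite sd0 /h (@fo_eq (flip d0) ds) //.
    by rewrite rf_ds rf_prev_dt // fpE flipK.
  apply: T0; last by apply/negP => /eqP e; move/negP: nd; apply; apply/eqP; apply: (@perm_inj _ sg); rewrite e sd0.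
  by apply: nX; rewrite vd vs eq_sym.
rewrite big1 // => d /eqP vd; apply: T0; apply: nX.
  by rewrite vd vs.
by rewrite vd vt.
Qed.

Lemma sum_orbit (A : zmodType) (F : gE K * bool -> A) m n : (m <= n <= ord)%N ->
  \sum_(d | out d && (m <= idx d < n)%N) F d = \sum_(m <= i < n) F (iter i fp ds).
Proof.
move=> /andP[mn nord].
have inj : {in index_iota m n &, injective (fun i => iter i fp ds)}.
  move=> i j; rewrite !mem_index_iota => /andP[_ ilt] /andP[_ jlt] e.
  by rewrite -(idx_iter (leq_trans ilt nord)) e idx_iter // (leq_trans jlt nord).
rewrite [RHS](_ : _ = \sum_(d <- [seq iter i fp ds | i <- index_iota m n]) F d); last by rewrite big_map.
rewrite big_uniq; last by rewrite map_inj_in_uniq // iota_uniq.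
apply: eq_bigl => d; apply/idP/mapP.
  case/andP => od /andP[h1 h2]; exists (idx d); first by rewrite mem_index_iota h1.
  by rewrite iter_idx.
case=> i; rewrite mem_index_iota => /andP[h1 h2] ->.
by rewrite out_iter idx_iter ?h1 ?h2 // (leq_trans h2 nord).
Qed.

Lemma L2 (A : zmodType) (pi : gV K -> A) f :
  div (D := dual sg dout s t) (fun e => pi (@ghd K e) - pi (@gtl K e)) f =
  Tr (G := dual sg dout s t) (fo dt) (fo ds) (pi t - pi s) f.
Proof.
pose g d := pi (dvert d).
have E1 : div (D := dual sg dout s t) (fun e => pi (@ghd K e) - pi (@gtl K e)) f =
          \sum_(d | fo d == f) (g (flip d) - g d).
  rewrite sum_darts /div /=; congr (_ + _).
  by rewrite -sumrN; apply: eq_bigr => e _; rewrite opprB.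
have E2 : \sum_(d | fo d == f) g (flip d) = \sum_(d | fo d == f) g (fp d).
  by apply: eq_bigr => d _; rewrite /g dvert_fp.
rewrite E1 sumrB E2 -sumrB.
have [_ vs] := ds_spec; have [_ vt] := dt_spec.
have [ods _] := ds_spec; have [odt _] := dt_spec.
have tele m n : (m <= n <= ord)%N -> \sum_(d | out d && (m <= idx d < n)%N) (g (fp d) - g d) =
    g (iter n fp ds) - g (iter m fp ds).
  move=> /andP[mn nord]; rewrite sum_orbit ?mn ?nord //.
  under eq_bigr do rewrite -iterS.
  by rewrite (telescope_sumr (fun i => g (iter i fp ds))).
rewrite /Tr; case: eqVneq => [->|n1].
  rewrite (eq_bigl (fun d => out d && (kk <= idx d < ord)%N)); last first.
    move=> d; rewrite fo_eqE rf_dt rf_inrP; case od: (out d) => //=.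
    by rewrite idx_lt // andbT; case: (ltnP (idx d) kk).
  rewrite tele ?(ltnW kk_lt) ?leqnn // iter_order ?iter_idx //; last exact: fp_inj.
  by rewrite /g vs vt opprB.
case: eqVneq => [->|n2].
  rewrite (eq_bigl (fun d => out d && (0 <= idx d < kk)%N)); last first.
    by move=> d; rewrite fo_eqE rf_ds rf_inrP; case: (out d) => //=; case: (idx d < kk)%N.
  by rewrite tele ?(ltnW kk_lt) // iter_idx // /g vt vs.
rewrite sumrB [X in _ - X](reindex_inj fp_inj) /=; apply/eqP; rewrite subr_eq0; apply/eqP.
apply: eq_bigl => d.
case: (eqVneq (fp d) ds) => [e|nd1].
  rewrite e (@fo_eq d dt) ?rf_dt ?rf_prev_ds //.
  by rewrite eq_sym (negbTE n1) eq_sym (negbTE n2).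
case: (eqVneq (fp d) dt) => [e|nd2].
  rewrite e (@fo_eq d ds) ?rf_ds ?rf_prev_dt //.
  by rewrite eq_sym (negbTE n2) eq_sym (negbTE n1).
by rewrite (@fo_eq (fp d) d) // rf_next.
Qed.

Lemma fo_surj (f : facet sg dout s t) : exists d, f = fo d.
Proof.
case: f => r prf; have := prf; rewrite /is_facet => /existsP[d /eqP rd].
by exists d; apply: val_inj; rewrite /= rd.
Qed.

Lemma sg_step d : sg d != ds -> sg d != dt -> fo (sg d) = fo (flip d).
Proof.
move=> n1 n2; apply: fo_eq.
have e : fp (flip d) = sg d by rewrite fpE flipK.
by rewrite -e; apply: rf_next; rewrite ?e.
Qed.

Lemma dual_conn (R : Type) (u : facet sg dout s t -> R) :
  (forall e, u (fo (e, true)) = u (fo (e, false))) -> forall f f', u f = u f'.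
Proof.
move=> H.
have Hf d : u (fo (flip d)) = u (fo d) by case: d => e [] /=; rewrite H.
have nst := bp_neq Hb.
have [_ vs] := ds_spec; have [_ vt] := dt_spec.
have atv d d' : dvert d = dvert d' -> u (fo d) = u (fo d').
  move=> vdd.
  pose b := if dvert d == s then ds else if dvert d == t then dt else d.
  have vb : dvert b = dvert d.
    by rewrite /b; case: (eqVneq (dvert d) s) => [->//|_]; case: (eqVneq (dvert d) t) => [->//|].
  have stp i : (i < order sg b)%N -> u (fo (iter i sg b)) = u (fo b).
    elim: i => [//|i IH] lt; rewrite iterS -IH ?(ltnW lt) //.
    have vi : dvert (iter i.+1 sg b) = dvert d by rewrite -vb; elim: (i.+1) => // j IHj; rewrite iterS dvert_sg.
    have nb : iter i.+1 sg b != b.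
      apply/negP=> /eqP e; have := findex_iter lt; rewrite e findex0 => /eqP; done.
    rewrite iterS in vi nb; rewrite sg_step ?Hf //.
      apply/eqP => e; move: nb vi; rewrite e /b vs; case: (eqVneq (dvert d) s) => [_|ns].
        by rewrite eqxx.
      by move=> _ es; rewrite es eqxx in ns.
    apply/eqP => e; move: nb vi; rewrite e /b vt; case: (eqVneq (dvert d) s) => [es|ns].
      by move=> _ et; move: nst; rewrite -es -et eqxx.
    case: (eqVneq (dvert d) t) => [_|nt]; first by rewrite eqxx.
    by move=> _ et; rewrite et eqxx in nt.
  have cb x : fconnect sg b x -> u (fo x) = u (fo b).
    by move=> cx; rewrite -(iter_findex cx) stp // findex_max.
  by rewrite (cb d) ?(cb d') //; apply: sg_conn; rewrite vb.
pose Q v := forall d, dvert d = v -> u (fo d) = u (fo ds).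
have Qs : Q s by move=> d vd; apply: atv; rewrite vd vs.
have Qe e : Q (gtl e) -> Q (ghd e).
  move=> qt d vd; rewrite -(qt (e, true)) // H; exact: atv.
have Qw x p : walk_from x p -> Q x -> Q (walk_end x p).
  elim: p x => [//|e p IH] x /= /andP[/eqP tx wp] qx.
  by rewrite walk_end_cons; apply: IH wp _; apply: Qe; rewrite tx.
have Qall d : u (fo d) = u (fo ds).
  have [p /andP[wp /eqP ep]] := walk_to Hb (dvert d).
  by apply: (Qw s p wp Qs); rewrite ep.
move=> f f'; have [d ->] := fo_surj f; have [d' ->] := fo_surj f'.
by rewrite !Qall.
Qed.

Lemma prim_conn (R : Type) (c : gV K -> R) :
  (forall e, c (ghd e) = c (gtl e)) -> forall v, c v = c s.
Proof.
move=> H v; have [p /andP[wp /eqP <-]] := walk_to Hb v.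
elim: p s wp => [//|e p IH] x /= /andP[/eqP tx wp].
by rewrite walk_end_cons IH // H tx.
Qed.

Lemma card_facet : #|gV (dual sg dout s t)| = (#|froots fp| + 1)%N.
Proof.
rewrite card_sig -[LHS]sum1_card big_mkcond big_sumType /= big_bool /=.
have -> : inr true \in [pred x | is_facet sg dout s t x] by rewrite inE; apply/existsP; exists ds; rewrite rf_ds.
have -> : inr false \in [pred x | is_facet sg dout s t x] by rewrite inE; apply/existsP; exists dt; rewrite rf_dt.
have Er r : (inl r \in [pred x | is_facet sg dout s t x]) = froots fp r && ~~ out r.
  rewrite inE; apply/existsP/andP => [[d /eqP]|[rr nor]].
    rewrite rfE; case: ifP => // od [<-]; split; first exact: (roots_root fconn_sym).
    apply: contraFN od; rewrite !outerE => h; apply: (connect_trans h).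
    by rewrite fconn_sym connect_root.
  by exists r; rewrite rfE (negbTE nor) (eqP rr).
under eq_bigr do rewrite Er.
rewrite -big_mkcond /= -[in RHS]sum1_card [in RHS](bigID (fun r => out r)) /=.
have -> : (\sum_(i in froots fp | out i) 1)%N = 1%N.
  rewrite (eq_bigl (fun r => r == froot fp ds)) ?big_pred1_eq //.
  move=> r; rewrite inE; apply/andP/eqP => [[rr or]|->].
    by rewrite -(eqP rr); apply/esym/(fingraph.rootP fconn_sym); rewrite -outerE.
  by split; [exact: (roots_root fconn_sym) | rewrite outerE connect_root].
by rewrite addnC addnAC.
Qed.

Lemma sum_enum (T : finType) (R : nmodType) (F : T -> R) :
  \sum_(i < #|T|) F (enum_val i) = \sum_x F x.
Proof. by rewrite -big_enum_val. Qed.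

Lemma FT (x : gE K -> rat) : (forall v, v != s -> v != t -> div x v = 0) ->
  exists phi : gV (dual sg dout s t) -> rat,
    forall e, x e = phi (fo (e, true)) - phi (fo (e, false)).
Proof.
move=> Hx.
pose FF := gV (dual sg dout s t).
pose rt (e : gE K) : FF := fo (e, true).
pose lf (e : gE K) : FF := fo (e, false).
pose intl (v : gV K) := (v != s) && (v != t).
pose Dm : 'M[rat]_(#|FF|, #|gE K|) :=
  \matrix_(i, j) ((rt (enum_val j) == enum_val i)%:R - (lf (enum_val j) == enum_val i)%:R).
pose Bp : 'M[rat]_(#|gE K|, #|gV K|) :=
  \matrix_(j, k) (if intl (enum_val k) then
     (ghd (enum_val j) == enum_val k)%:R - (gtl (enum_val j) == enum_val k)%:R else 0).
have DmE (phi : FF -> rat) j :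
    ((\row_i phi (enum_val i)) *m Dm) 0 j = phi (rt (enum_val j)) - phi (lf (enum_val j)).
  rewrite mxE; under eq_bigr do rewrite !mxE.
  rewrite (sum_enum (fun f => phi f * ((rt (enum_val j) == f)%:R - (lf (enum_val j) == f)%:R))).
  by under eq_bigr do rewrite mulrBr; rewrite sumrB !sum_delta.
have BpE (y : gE K -> rat) k :
    ((\row_j y (enum_val j)) *m Bp) 0 k = if intl (enum_val k) then div y (enum_val k) else 0.
  rewrite mxE; under eq_bigr do rewrite !mxE.
  rewrite (sum_enum (fun e => y e * (if intl (enum_val k) then
     (ghd e == enum_val k)%:R - (gtl e == enum_val k)%:R else 0))).
  case: ifP => _; first by rewrite div_sum.
  by rewrite big1 // => e _; rewrite mulr0.
have DB : Dm *m Bp = 0.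
  apply/matrixP => i k; rewrite [RHS]mxE.
  transitivity (((\row_j ((rt (enum_val j) == enum_val i)%:R - (lf (enum_val j) == enum_val i)%:R)) *m Bp) 0 k).
    by rewrite !mxE; apply: eq_bigr => j _; rewrite /Dm !mxE.
  rewrite (BpE (fun e => (rt e == enum_val i)%:R - (lf e == enum_val i)%:R)).
  case: ifP => // /andP[n1 n2].
  by rewrite (L1 (fun f : FF => (f == enum_val i)%:R)) /Tr (negbTE n1) (negbTE n2).
have rD : (#|FF| - 1 <= \rank Dm)%N.
  have : (\rank (kermx Dm) <= 1)%N.
    suff sub : (kermx Dm <= (const_mx 1 : 'rV[rat]_#|FF|))%MS.
      exact: leq_trans (mxrankS sub) (rank_leq_row _).
    apply/row_subP => i; set r := row i (kermx Dm).
    have r0 : r *m Dm = 0 by rewrite /r -row_mul mulmx_ker row0.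
    pose u (f : FF) := r 0 (enum_rank f).
    have rE : r = \row_i u (enum_val i) by apply/rowP => j; rewrite [RHS]mxE /u enum_valK.
    have hu : forall e, u (fo (e, true)) = u (fo (e, false)).
      move=> e; apply/eqP; rewrite -subr_eq0; have := DmE u (enum_rank e).
      by rewrite -rE r0 mxE enum_rankK => <-.
    have [f0 _] : exists f0 : FF, true by exists (fo ds).
    have -> : r = u f0 *: const_mx 1.
      by rewrite rE; apply/rowP => j; rewrite !mxE mulr1 (dual_conn hu (enum_val j) f0).
    by apply: scalemx_sub; apply: submx_refl.
  rewrite mxrank_ker; lia.
have rB : (#|gV K| - 2 <= \rank Bp)%N.
  rewrite -mxrank_tr.
  pose ds_ := delta_mx 0 (enum_rank s) : 'rV[rat]_#|gV K|.
  pose dt_ := delta_mx 0 (enum_rank t) : 'rV[rat]_#|gV K|.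
  have : (\rank (kermx Bp^T) <= 2)%N.
    suff sub : (kermx Bp^T <= (ds_ + dt_)%MS)%MS.
      apply: leq_trans (mxrankS sub) _.
      by apply: leq_trans (mxrank_adds_leqif _ _) _; rewrite !mxrank_delta.
    apply/row_subP => i; set r := row i (kermx Bp^T).
    have r0 : r *m Bp^T = 0 by rewrite /r -row_mul mulmx_ker row0.
    pose c (v : gV K) := r 0 (enum_rank v).
    pose c' v := if intl v then c v else 0.
    have T1 e : (r *m Bp^T) 0 (enum_rank e) =
        \sum_v c v * (if intl v then (ghd e == v)%:R - (gtl e == v)%:R else 0).
      rewrite mxE -(sum_enum (fun v => c v * (if intl v then (ghd e == v)%:R - (gtl e == v)%:R else 0))).
      by apply: eq_bigr => k _; rewrite /c enum_valK; congr (_ * _); rewrite /Bp !mxE enum_rankK.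
    have hc e : c' (ghd e) = c' (gtl e).
      apply/eqP; rewrite -subr_eq0; apply/eqP.
      have := T1 e; rewrite r0 mxE => /esym.
      rewrite (eq_bigr (fun v => c' v * ((ghd e == v)%:R - (gtl e == v)%:R))); last first.
        by move=> v _; rewrite /c'; case: ifP; rewrite ?mul0r ?mulr0.
      by under eq_bigr do rewrite mulrBr; rewrite sumrB !sum_delta.
    have c0 v : intl v -> c v = 0.
      move=> iv; have := prim_conn hc v; rewrite /c' iv; have -> : intl s = false by rewrite /intl eqxx.
      by [].
    have -> : r = c s *: ds_ + c t *: dt_.
      apply/rowP => j.
      have er u : (j == enum_rank u) = (enum_val j == u).
        by rewrite -(inj_eq enum_val_inj) enum_rankK.
      have -> : (c s *: ds_ + c t *: dt_) 0 j = c s * (enum_val j == s)%:R + c t * (enum_val j == t)%:R.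
        by rewrite /ds_ /dt_ !mxE !eqxx /= !er.
      have -> : r 0 j = c (enum_val j) by rewrite /c enum_valK.
      have nst := bp_neq Hb.
      case: (eqVneq (enum_val j) s) => [->|ns].
        by rewrite (negbTE nst) mulr1 mulr0 addr0.
      case: (eqVneq (enum_val j) t) => [->|nt]; first by rewrite mulr1 mulr0 add0r.
      by rewrite c0 ?ns ?nt // ?mulr0 ?addr0 // /intl ns nt.
    by apply: addmx_sub_adds; apply: scalemx_sub; apply: submx_refl.
  rewrite mxrank_ker mxrank_tr; lia.
have DsubK : (Dm <= kermx Bp)%MS by rewrite sub_kermx DB.
have KsubD : (kermx Bp <= Dm)%MS.
  rewrite -(mxrank_leqif_sup DsubK).2 eqn_leq (mxrankS DsubK) /=.
  have g0 : (#|gV K| + #|froots fp| = #|gE K| + 2)%N by case: Hp.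
  have cf := card_facet.
  rewrite mxrank_ker; move: (\rank Dm) (\rank Bp) rD rB => a b rD rB; rewrite /FF cf in rD. move: g0 rD rB. clear. move: (#|gV K|) (#|froots fp|) (#|gE K|) => n1 n2 n3. lia.
have xK : ((\row_j x (enum_val j)) <= kermx Bp)%MS.
  rewrite sub_kermx; apply/eqP/rowP => k; rewrite BpE [RHS]mxE.
  by case: ifP => // /andP[n1 n2]; rewrite Hx.
have /submxP[Y YE] := submx_trans xK KsubD.
exists (fun f => Y 0 (enum_rank f)) => e.
have := DmE (fun f => Y 0 (enum_rank f)) (enum_rank e); rewrite enum_rankK => <-.
have -> : \row_i Y 0 (enum_rank (enum_val i : FF)) = Y.
  by apply/rowP => i; rewrite mxE enum_valK.
by rewrite -YE mxE enum_rankK.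
Qed.

Local Notation KD := (dual sg dout s t).
Local Notation sD := (fo dt).
Local Notation tD := (fo ds).

Lemma sum_count (X p : seq (gE K)) :
  \sum_(e <- p) ((e \in X)%:R : rat) = (count (mem X) p)%:R.
Proof. by elim: p => [|a p IH]; rewrite ?big_nil ?big_cons //= IH natrD. Qed.

Lemma cross_pot X : maxpath s X -> exists phi : gV KD -> rat,
  (forall e, (e \in X)%:R = phi (fo (e, true)) - phi (fo (e, false))) /\ phi tD - phi sD = 1.
Proof.
rewrite (maxpathP Hb) eqxx /= => /andP[wX /eqP eX].
have uX := walk_uniq_edges (bp_acyclic Hb) wX.
have dX v : div (fun e => (e \in X)%:R : rat) v = (t == v)%:R - (s == v)%:R.
  by rewrite div_uniq // (@walk_div K rat s X v wX) eX.
have [phi Hphi] : exists phi : gV KD -> rat,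
    forall e, (e \in X)%:R = phi (fo (e, true)) - phi (fo (e, false)).
  apply: FT => v n1 n2; rewrite dX eq_sym (negbTE n2) eq_sym (negbTE n1) subrr //.
exists phi; split => //.
have := L1 phi t.
have -> : div (fun e => phi (fo (e, true)) - phi (fo (e, false))) t = div (fun e => (e \in X)%:R : rat) t.
  by rewrite /div; congr (_ - _); apply: eq_bigr => e _; rewrite Hphi.
have nst := bp_neq Hb.
by rewrite dX eqxx /Tr (negbTE nst) eq_sym (negbTE nst) eqxx subr0 => <-.
Qed.

Lemma dual_acyclic : acyclic KD.
Proof.
move=> v [//|e p] wp ep.
have [X /andP[mX eX]] := edge_on_maxpath Hb e.
have [phi [Hphi _]] := cross_pot mX.
have := walk_telescope phi wp; rewrite ep subrr.
rewrite (eq_bigr (fun e' => (e' \in X)%:R)) => [|e' _]; last by rewrite Hphi.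
rewrite sum_count => /eqP; rewrite Num.Theory.pnatr_eq0 /= eX.
by [].
Qed.

Lemma orbit_fo d x : ~~ out d -> fconnect fp d x -> fo x = fo d.
Proof.
move=> nod c; apply: fo_eq; rewrite !rfE.
have -> : out x = out d.
  rewrite !outerE; apply/idP/idP => h; first by apply: connect_trans h _; rewrite fconn_sym.
  exact: connect_trans h c.
rewrite (negbTE nod); congr inl; apply/esym/(fingraph.rootP fconn_sym).
by [].
Qed.

Lemma dual_src_only f : ~~ [exists e, @ghd KD e == f] -> f = sD.
Proof.
move=> nf; have [d0 fd] := fo_surj f.
have Hin d : fo d = f -> d.2 = false.
  case: d => e [] //= fe; case/existsP: nf; exists e; by rewrite /= fe.
have Hac := bp_acyclic Hb.
case od: (out d0).
  case il: (idx d0 < kk)%N.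
    have : fo ds = f by rewrite fd; apply: fo_eq; rewrite rf_ds rfE od il.
    move/Hin; have [_ vs] := ds_spec; case: ds vs => e [] //= he _.
    by move: (bp_noin Hb e); rewrite -[ghd e]/(dvert (e, false)) he eqxx.
  by rewrite fd; apply: fo_eq; rewrite rf_dt rfE od il.
have [x cx xmin] := arg_minnP (fun x => rk (dvert x)) (connect0 _ d0 : fconnect fp d0 d0).
have cy : fconnect fp d0 (fp x) by apply: connect_trans cx (fconnect1 _ _).
have hx := Hin x (etrans (orbit_fo (negbT od) cx) (esym fd)).
have := xmin _ cy; rewrite dvert_fp; case: x hx {cx xmin cy} => e [] //= _.
by rewrite leqNgt rk_lt.
Qed.

Lemma dual_snk_only f : ~~ [exists e, @gtl KD e == f] -> f = tD.
Proof.
move=> nf; have [d0 fd] := fo_surj f.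
have Hout d : fo d = f -> d.2 = true.
  case: d => e [] //= fe; case/existsP: nf; exists e; by rewrite /= fe.
have Hac := bp_acyclic Hb.
case od: (out d0).
  case il: (idx d0 < kk)%N.
    by rewrite fd; apply: fo_eq; rewrite rf_ds rfE od il.
  have : fo dt = f by rewrite fd; apply: fo_eq; rewrite rf_dt rfE od il.
  move/Hout; have [_ vt] := dt_spec; case: dt vt => e [] //= he _.
  by move: (bp_noout Hb e); rewrite -[gtl e]/(dvert (e, true)) he eqxx.
have [x cx xmax] := arg_maxnP (fun x => rk (dvert x)) (connect0 _ d0 : fconnect fp d0 d0).
have cy : fconnect fp d0 (fp x) by apply: connect_trans cx (fconnect1 _ _).
have hx := Hout x (etrans (orbit_fo (negbT od) cx) (esym fd)).
have := xmax _ cy; rewrite dvert_fp; case: x hx {cx xmax cy} => e [] //= _.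
by rewrite leqNgt rk_lt.
Qed.

Lemma dual_bipolar : bipolar (G := KD) sD tD.
Proof.
have Hac := dual_acyclic.
split => //.
- rewrite card_facet addn1 ltnS lt0n; apply/negP => /eqP /card0_eq /(_ (froot fp ds)).
  by rewrite inE (roots_root fconn_sym).
- move=> f; apply/idP/eqP => [/dual_src_only //|->].
  have [f0 nf0] := exists_source Hac sD.
  by rewrite -(dual_src_only nf0).
move=> f; apply/idP/eqP => [/dual_snk_only //|->].
have [f0 nf0] := exists_sink Hac sD.
by rewrite -(dual_snk_only nf0).
Qed.

Lemma sum_count_R (R : ringType) (X p : seq (gE K)) :
  \sum_(e <- p) ((e \in X)%:R : R) = (count (mem X) p)%:R.
Proof. by elim: p => [|a p IH]; rewrite ?big_nil ?big_cons //= IH natrD. Qed.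

Lemma cross_cnt X Y : maxpath s X -> maxpath (G := KD) sD Y -> count (mem X) Y = 1%N.
Proof.
move=> mX mY; have [phi [Hphi e1]] := cross_pot mX.
move: mY; rewrite (maxpathP dual_bipolar) eqxx /= => /andP[wY /eqP eY].
have := walk_telescope phi wY; rewrite eY e1.
rewrite (eq_bigr (fun e' => (e' \in X)%:R)) => [|e' _]; last by rewrite Hphi.
rewrite sum_count => /eqP h; apply/eqP; rewrite -(@Num.Theory.eqr_nat rat) h; done.
Qed.

Lemma cross_int X Y : maxpath s X -> maxpath (G := KD) sD Y ->
  \sum_(e | e \in Y) ((e \in X)%:R : int) = 1 /\ \sum_(e | e \in X) ((e \in Y)%:R : int) = 1.
Proof.
move=> mX mY; have c1 := cross_cnt mX mY.
have uY : uniq Y.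
  by move: mY; rewrite (maxpathP dual_bipolar) => /and3P[_ w _]; exact: (walk_uniq_edges dual_acyclic w).
have E1 : \sum_(e | e \in Y) ((e \in X)%:R : int) = 1.
  by rewrite -big_uniq // sum_count_R c1.
split => //; rewrite -E1 big_mkcond [RHS]big_mkcond; apply: eq_bigr => e _.
by case: (e \in X); case: (e \in Y).
Qed.

Lemma F1 (A : zmodType) (x : gE K -> A) (b : A) : (forall v, div x v = Tr s t b v) ->
  forall v Y, maxpath (G := KD) v Y -> \sum_(e | e \in Y) x e = b.
Proof.
move=> Hx v Y mY; have vS := maxpath_s dual_bipolar mY; subst v.
have [c [Hc ct]] : exists c : gV K -> int,
    (forall e : gE K, (e \in Y)%:R = c (@ghd K e) - c (@gtl K e)) /\ c t - c s = 1.
  apply: (potential Hb) => v X mX.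
  by have := mX; rewrite (maxpath_s Hb mX) => mX'; case: (cross_int mX' mY).
have E : \sum_(e | e \in Y) x e = \sum_(e : gE K) x e *~ (c (@ghd K e) - c (@gtl K e)).
  rewrite big_mkcond; apply: eq_bigr => e _; rewrite -Hc.
  by case: (e \in Y); rewrite ?mulr1z ?mulr0z.
by rewrite E div_exchange; under eq_bigr do rewrite Hx; rewrite (Tr_exchange Hb) ct.
Qed.

Lemma F1' (A : zmodType) (x : gE K -> A) (b : A) :
  (forall f, div (D := KD) x f = Tr (G := KD) sD tD b f) ->
  forall v X, maxpath (G := K) v X -> \sum_(e | e \in X) x e = b.
Proof.
move=> Hx v X mX; have vS := maxpath_s Hb mX; subst v.
have [c [Hc ct]] : exists c : gV KD -> int,
    (forall e, (e \in X)%:R = c (@ghd KD e) - c (@gtl KD e)) /\ c tD - c sD = 1.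
  apply: (potential dual_bipolar) => f Y mY.
  by have := mY; rewrite (maxpath_s dual_bipolar mY) => mY'; case: (cross_int mX mY').
have E : \sum_(e | e \in X) x e = \sum_e x e *~ (c (@ghd KD e) - c (@gtl KD e)).
  rewrite big_mkcond; apply: eq_bigr => e _; rewrite -Hc.
  by case: (e \in X); rewrite ?mulr1z ?mulr0z.
by rewrite E (div_exchange (D := KD)); under eq_bigr do rewrite Hx; rewrite (Tr_exchange dual_bipolar) ct.
Qed.
End Plane.

Local Close Scope ring_scope.

Section Conv.
Local Open Scope ring_scope.
Variables (D : digraph) (n : nat) (h : 'I_n -> gE D) (h' : gE D -> 'I_n).
Hypotheses (hK : cancel h h') (hK' : cancel h' h).

Lemma sum_conv (A : zmodType) (P : pred (gE D)) (F : 'I_n -> A) :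
  \sum_(e | P e) F (h' e) = \sum_(i | P (h i)) F i.
Proof.
rewrite (reindex h) /=; last by apply: onW_bij; exists h'.
by apply: eq_bigr => i _; rewrite hK.
Qed.

Lemma Eff_div (A : zmodType) (a : 'I_n -> A) (P : pred 'I_n) v :
  Eff h a P v = div (fun e => if P (h' e) then a (h' e) else 0) v.
Proof.
rewrite /Eff /div !(sum_conv (fun e => _ == v) (fun i => if P i then a i else 0)).
by rewrite -!big_mkcondl.
Qed.
End Conv.

Local Open Scope ring_scope.
Lemma eq_div (D : digraph) (A : zmodType) (x y : gE D -> A) v :
  (forall e, x e = y e) -> div x v = div y v.
Proof. by move=> H; rewrite /div; congr (_ - _); apply: eq_bigr => e _; rewrite H. Qed.

Lemma sum_swap (A : zmodType) (n : nat) (a : 'I_n -> A) (P Q : pred 'I_n) :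
  (\sum_(i | P i) (if Q i then a i else 0) = \sum_(i | Q i) (if P i then a i else 0))%R.
Proof.
rewrite big_mkcond [RHS]big_mkcond; apply: eq_bigr => i _.
by case: (P i); case: (Q i).
Qed.

Local Close Scope ring_scope.

Theorem theorem4p4 (A : zmodType) (G H : digraph)
    (sG tG : gV G) (sigG : {perm (gE G * bool)}) (oG : gE G * bool)
    (sH tH : gV H) (sigH : {perm (gE H * bool)}) (oH : gE H * bool)
    (n : nat) (phi : 'I_n -> gE G) (psi : 'I_n -> gE H) (b : A) (a : 'I_n -> A) :
  bipolar sG tG -> upward_plane sigG oG sG tG ->
  bipolar sH tH -> upward_plane sigH oH sH tH ->
  bijective phi -> bijective psi ->
  (solution sG tG phi psi b a <->
   solution (dual_source sigH oH sH tH) (dual_sink sigH oH sH tH)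
            (H := dual sigG oG sG tG) psi phi b a).
Proof.
move=> HbG HpG HbH HpH [phi' phiK phiK'] [psi' psiK psiK'].
split.
- move=> Hsol v Y mY f.
  rewrite (Eff_div (D := dual sigH oH sH tH) psiK psiK').
  have Hz : forall v' X, maxpath (G := H) v' X ->
      (\sum_(e | e \in X) (if phi (psi' e) \in Y then a (psi' e) else 0) = b)%R.
    move=> v' X mX.
    have Hx : forall w, div (fun e => if psi (phi' e) \in X then a (phi' e) else 0%R) w = Tr sG tG b w.
      by move=> w; rewrite -(Hsol _ _ mX w) (Eff_div phiK phiK').
    have := F1 HbG HpG Hx mY.
    rewrite (sum_conv phiK phiK' _ (fun i => if psi i \in X then a i else 0%R)).
    rewrite (sum_conv psiK psiK' _ (fun i => if phi i \in Y then a i else 0%R)).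
    by move=> <-; apply: sum_swap.
  have [pi [Hpi pist]] := potential HbH Hz.
  transitivity (div (D := dual sigH oH sH tH) (fun e => pi (@ghd H e) - pi (@gtl H e))%R f).
    by apply: eq_div => e; rewrite Hpi.
  by rewrite (L2 HbH HpH) pist.
- move=> Hsol v X mX w.
  rewrite (Eff_div phiK phiK').
  have Hz : forall v' Y, maxpath (G := dual sigG oG sG tG) v' Y ->
      (\sum_(e | e \in Y) (if psi (phi' e) \in X then a (phi' e) else 0) = b)%R.
    move=> v' Y mY.
    have Hx : forall f, div (D := dual sigH oH sH tH)
        (fun e => if phi (psi' e) \in Y then a (psi' e) else 0%R) f =
        Tr (dual_source sigH oH sH tH) (dual_sink sigH oH sH tH) b f.
      by move=> f; rewrite -(Hsol _ _ mY f) (Eff_div (D := dual sigH oH sH tH) psiK psiK').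
    have := F1' HbH HpH Hx mX.
    rewrite (sum_conv psiK psiK' _ (fun i => if phi i \in Y then a i else 0%R)).
    rewrite (sum_conv phiK phiK' _ (fun i => if psi i \in X then a i else 0%R)).
    by move=> <-; apply: sum_swap.
  have [ph [Hph phst]] := potential (dual_bipolar HbG HpG) Hz.
  transitivity (div (fun e => ph (facet_of sigG oG sG tG (e, true)) - ph (facet_of sigG oG sG tG (e, false)))%R w).
    by apply: eq_div => e; rewrite Hph.
  by rewrite (L1 HbG HpG) phst.
Qed.
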